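(* For $n\ge1$, $$\left|\Pi_n \wr C_2 (1^11^1, 1^11^2, 1^21^1)\right|=\left|\Pi_n \wr C_2 (1^11^2, 1^21^1, 1^12^1)\right|=\left|\Pi_n \wr C_2 (1^12^1, 1^12^2, 1^22^1)\right|=2^n.$$
   Context: For $n\ge0$ let $[n]=\{1,\dots,n\}$. A $2$-colored set partition of $[n]$ is a set partition of $[n]$ together with an assignment of a color from $\{1,2\}$ to each element; $\Pi_n\wr C_2$ is the set of these. For a set $S$ of patterns, $\Pi_n\wr C_2(S)$ is the set of such colored partitions avoiding every pattern in $S$ in the pattern sense. For the patterns used here: $\sigma$ contains $1^11^1$ iff two elements in the same block have the same color; $1^11^2$ iff there are $i<j$ in the same block with $i$ colored $1$ and $j$ colored $2$; $1^21^1$ iff there are $i<j$ in the same block with $i$ colored $2$ and $j$ colored $1$; $1^12^1$ iff two elements in different blocks have the same color; $1^12^2$ iff there are $i<j$ in different blocks with $i$ colored $1$ and $j$ colored $2$; $1^22^1$ iff there are $i<j$ in different blocks with $i$ colored $2$ and $j$ colored $1$. *)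

(* Defs.v *)
From mathcomp Require Import all_boot.
Set Implicit Arguments. Unset Strict Implicit. Unset Printing Implicit Defensive.

(* Elements of [n] = {1..n} are represented by 'I_n (i.e. 0..n-1, order preserved).
   Colors {1,2} are represented by 'I_2: color 1 = value 0, color 2 = value 1. *)
Definition col1 : 'I_2 := @Ordinal 2 0 isT.
Definition col2 : 'I_2 := @Ordinal 2 1 isT.

(* A 2-colored set partition of [n]: a set partition P of [n] (mathcomp's
   [partition P [set: 'I_n]]: blocks nonempty, pairwise disjoint, covering)
   together with a coloring c. *)
Definition colored_partition (n : nat) := ({set {set 'I_n}} * {ffun 'I_n -> 'I_2})%type.

Definition is_cpart n (x : colored_partition n) : bool :=
  partition x.1 [set: 'I_n].

Definition same_block n (P : {set {set 'I_n}}) (i j : 'I_n) : bool :=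
  [exists B in P, (i \in B) && (j \in B)].

(* contains 1^1 1^1: two (distinct) elements in the same block with the same color *)
Definition contains_11_11 n (x : colored_partition n) : bool :=
  [exists i : 'I_n, exists j : 'I_n,
     [&& i != j, same_block x.1 i j & x.2 i == x.2 j]].
Definition contains_11_12 n (x : colored_partition n) : bool :=
  [exists i : 'I_n, exists j : 'I_n,
     [&& i < j, same_block x.1 i j, x.2 i == col1 & x.2 j == col2]].
Definition contains_12_11 n (x : colored_partition n) : bool :=
  [exists i : 'I_n, exists j : 'I_n,
     [&& i < j, same_block x.1 i j, x.2 i == col2 & x.2 j == col1]].
(* contains 1^1 2^1: two elements in different blocks with the same color *)
Definition contains_11_21 n (x : colored_partition n) : bool :=
  [exists i : 'I_n, exists j : 'I_n,
     [&& i != j, ~~ same_block x.1 i j & x.2 i == x.2 j]].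
Definition contains_11_22 n (x : colored_partition n) : bool :=
  [exists i : 'I_n, exists j : 'I_n,
     [&& i < j, ~~ same_block x.1 i j, x.2 i == col1 & x.2 j == col2]].
Definition contains_12_21 n (x : colored_partition n) : bool :=
  [exists i : 'I_n, exists j : 'I_n,
     [&& i < j, ~~ same_block x.1 i j, x.2 i == col2 & x.2 j == col1]].

Definition avoiders n (S : seq (colored_partition n -> bool)) : {set colored_partition n} :=
  [set x | is_cpart x & all (fun p => ~~ p x) S].

(* Main.v *)
Require Import Defs.
From mathcomp Require Import all_boot.
Set Implicit Arguments. Unset Strict Implicit. Unset Printing Implicit Defensive.

Section S.
Variable n : nat.

Lemma sb_sym (P : {set {set 'I_n}}) i j : same_block P i j = same_block P j i.
Proof.
by apply/existsP/existsP => -[B /andP[PB /andP[iB jB]]]; exists B; rewrite PB iB jB.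
Qed.

Lemma sbE (P : {set {set 'I_n}}) i j : partition P setT ->
  same_block P i j = (j \in pblock P i).
Proof.
move=> HP; have [/eqP Hc tiP _] := and3P HP.
apply/existsP/idP.
  by case=> B /andP[PB /andP[iB jB]]; rewrite (def_pblock tiP PB iB).
move=> jp; exists (pblock P i); rewrite jp pblock_mem ?mem_pblock Hc ?inE //.
Qed.

Lemma sb_refl (P : {set {set 'I_n}}) i : partition P setT -> same_block P i i.
Proof. by move=> HP; rewrite sbE // mem_pblock; case/and3P: HP => /eqP -> _ _; rewrite inE. Qed.

Lemma col_cases (x y : 'I_2) : x != y ->
  (x == col1) && (y == col2) \/ (x == col2) && (y == col1).
Proof.
by case: x => [[|[|//]]] Hx; case: y => [[|[|//]]] Hy; rewrite /col1 /col2 /=;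
  auto.
Qed.

Lemma card_gen (R : {ffun 'I_n -> 'I_2} -> rel 'I_n)
  (S : seq (colored_partition n -> bool))
  (Req : forall c, equivalence_rel (R c))
  (H : forall P c, partition P setT ->
     all (fun p => ~~ p (P, c)) S = [forall i, forall j, same_block P i j == R c i j]) :
  #|avoiders S| = 2 ^ n.
Proof.
have eqi c : {in [set: 'I_n] & &, equivalence_rel (R c)} by move=> x y z _ _ _; apply: Req.
have -> : avoiders S =
   [set (equivalence_partition (R c) setT, c) | c : {ffun 'I_n -> 'I_2}].
  apply/setP => -[P c]; rewrite inE /is_cpart /=.
  apply/andP/imsetP.
    move=> [HP Hav]; exists c => //; congr pair.
    rewrite -(equivalence_partition_pblock HP); apply: eq_imset => x.
    apply/setP => y; rewrite !inE -sbE //.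
    by move: Hav; rewrite H // => /forallP /(_ x) /forallP /(_ y) /eqP.
  move=> [c' _ [-> ->]].
  have HP := equivalence_partitionP (eqi c').
  split => //; rewrite H //; apply/forallP => i; apply/forallP => j.
  by rewrite sbE // pblock_equivalence_partition ?inE.
rewrite card_imset; last by move=> c1 c2 /(congr1 snd).
by rewrite card_ffun !card_ord.
Qed.

Lemma noex (F : 'I_n -> 'I_n -> bool) :
  ~~ [exists i, exists j, F i j] -> forall i j, ~~ F i j.
Proof. by move/existsPn => H i j; move/existsPn: (H i); apply. Qed.

Lemma ord_neq (i j : 'I_n) : (i < j)%N -> i != j.
Proof. by move=> lt; rewrite -val_eqE /= neq_ltn lt. Qed.

Lemma case1 (P : {set {set 'I_n}}) (c : {ffun 'I_n -> 'I_2}) : partition P setT ->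
  ~~ contains_11_11 (P, c) && (~~ contains_11_12 (P, c) && (~~ contains_12_11 (P, c) && true))
  = [forall i, forall j, same_block P i j == (i == j)].
Proof.
move=> HP; apply/idP/idP.
  move=> /and3P[/noex A /noex B /andP[/noex C _]].
  have key (i j : 'I_n) : (i < j)%N -> ~~ same_block P i j.
    move=> lt; apply/negP => sb; have ne := ord_neq lt.
    have := A i j; rewrite ne sb /= => cij.
    case: (col_cases cij) => /andP[ci cj].
      by have := B i j; rewrite lt sb ci cj.
    by have := C i j; rewrite lt sb ci cj.
  apply/forallP=> i; apply/forallP=> j.
  case: (ltngtP i j) => [lt|gt|eq].
  - by rewrite (negbTE (ord_neq lt)) (negbTE (key _ _ lt)).
  - by rewrite [i == j]eq_sym (negbTE (ord_neq gt)) sb_sym (negbTE (key _ _ gt)).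
  - have -> : i = j by apply: val_inj. by rewrite eqxx sb_refl.
move/forallP=> H.
have E i j : same_block P i j = (i == j) by apply/eqP: (forallP (H i) j).
rewrite /contains_11_11 /contains_11_12 /contains_12_11.
by apply/and3P; split; [ | | rewrite andbT]; apply/existsPn=> i; apply/existsPn=> j;
  rewrite E; case: eqVneq => [->|]; rewrite ?eqxx ?ltnn /= ?andbF.
Qed.

Lemma case2 (P : {set {set 'I_n}}) (c : {ffun 'I_n -> 'I_2}) : partition P setT ->
  ~~ contains_11_12 (P, c) && (~~ contains_12_11 (P, c) && (~~ contains_11_21 (P, c) && true))
  = [forall i, forall j, same_block P i j == (c i == c j)].
Proof.
move=> HP; apply/idP/idP.
  move=> /and3P[/noex B /noex C /andP[/noex A _]].
  have key (i j : 'I_n) : (i < j)%N -> c i != c j -> ~~ same_block P i j.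
    move=> lt cij; apply/negP => sb.
    case: (col_cases cij) => /andP[ci cj].
      by have := B i j; rewrite lt sb ci cj.
    by have := C i j; rewrite lt sb ci cj.
  apply/forallP=> i; apply/forallP=> j.
  case: (eqVneq i j) => [->|ne]; first by rewrite eqxx sb_refl.
  case: (eqVneq (c i) (c j)) => cij.
    by have := A i j; rewrite ne cij eqxx andbT negbK => ->.
  case: (ltngtP i j) => [lt|gt|eq].
  - by rewrite (negbTE (key _ _ lt cij)).
  - by rewrite sb_sym (negbTE (key _ _ gt _)) // eq_sym.
  - by move: ne; rewrite -val_eqE /= eq eqxx.
move/forallP=> H.
have E i j : same_block P i j = (c i == c j) by apply/eqP: (forallP (H i) j).
rewrite /contains_11_21 /contains_11_12 /contains_12_11.
apply/and3P; split; [ | | rewrite andbT]; apply/existsPn=> i; apply/existsPn=> j;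
  rewrite E.
- by apply/negP => /and4P[_ /eqP e /eqP a /eqP b]; move: e; rewrite a b.
- by apply/negP => /and4P[_ /eqP e /eqP a /eqP b]; move: e; rewrite a b.
- by case: (c i == c j); rewrite ?andbF.
Qed.

Lemma case3 (P : {set {set 'I_n}}) (c : {ffun 'I_n -> 'I_2}) : partition P setT ->
  ~~ contains_11_21 (P, c) && (~~ contains_11_22 (P, c) && (~~ contains_12_21 (P, c) && true))
  = [forall i, forall j, same_block P i j == true].
Proof.
move=> HP; apply/idP/idP.
  move=> /and3P[/noex A /noex B /andP[/noex C _]].
  have key (i j : 'I_n) : (i < j)%N -> same_block P i j.
    move=> lt; apply: contraT => sb; have ne := ord_neq lt.
    case: (eqVneq (c i) (c j)) => cij.
      by have := A i j; rewrite ne sb cij eqxx.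
    case: (col_cases cij) => /andP[ci cj].
      by have := B i j; rewrite lt sb ci cj.
    by have := C i j; rewrite lt sb ci cj.
  apply/forallP=> i; apply/forallP=> j; rewrite eqb_id.
  case: (ltngtP i j) => [lt|gt|eq].
  - exact: key.
  - by rewrite sb_sym key.
  - have -> : i = j by apply: val_inj. by rewrite sb_refl.
move/forallP=> H.
have E i j : same_block P i j = true by apply/eqP: (forallP (H i) j).
rewrite /contains_11_21 /contains_11_22 /contains_12_21.
by apply/and3P; split; [ | | rewrite andbT]; apply/existsPn=> i; apply/existsPn=> j;
  rewrite E /= ?andbF.
Qed.

End S.

Theorem mainTheorem13 (n : nat) : 1 <= n ->
  [/\ #|avoiders [:: @contains_11_11 n; @contains_11_12 n; @contains_12_11 n]| = 2 ^ n,
      #|avoiders [:: @contains_11_12 n; @contains_12_11 n; @contains_11_21 n]| = 2 ^ n &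
      #|avoiders [:: @contains_11_21 n; @contains_11_22 n; @contains_12_21 n]| = 2 ^ n].
Proof.
move=> n1; split.
- apply: (@card_gen n (fun _ => eq_op)) => [c x y z|P c HP].
    by split => // /eqP ->.
  exact: case1.
- apply: (@card_gen n (fun c i j => c i == c j)) => [c x y z|P c HP].
    by split => // /eqP ->.
  exact: case2.
- apply: (@card_gen n (fun _ _ _ => true)) => [c x y z|P c HP] //.
  exact: case3.
Qed.
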